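(* Consider clipped ADOPT with $\beta_1,\beta_2\in[0,1)$, $\epsilon>0$, learning rates $\alpha_t>0$, clipping values $c_t\ge0$, and deterministic $\theta_0$: $m_0=0$, $v_0=g_0\odot g_0$, and for $t\ge1$, $$m_t=\beta_1m_{t-1}+(1-\beta_1)\,\mathrm{Clip}\Big(\frac{g_t}{\max\{\sqrt{v_{t-1}},\epsilon\}},c_t\Big),\quad\theta_t=\theta_{t-1}-\alpha_tm_t,\quad v_t=\beta_2v_{t-1}+(1-\beta_2)g_t\odot g_t,$$ where $g_0,g_1,\dots$ are random vectors in $\mathbb{R}^D$ with $\mathbb{E}\|g_t\|^2\le G^2$ for all $t\ge0$. Then for all $t\ge0$, $$\mathbb{E}\big[\|m_t\|\big]\le\frac{\sqrt2\,G}{\epsilon}.$$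
   Context: For $a\in\mathbb{R}^D$ and $c\ge0$, $\mathrm{Clip}(a,c)_i=\min\{\max\{a_i,-c\},c\}$. Norms are Euclidean; $\odot$, square root, division and $\max\{\cdot,\epsilon\}$ act elementwise. *)

(* Defs.v *)
From HB Require Import structures.
From mathcomp Require Import all_boot all_order all_algebra.
From mathcomp Require Import all_classical all_reals all_analysis.
Set Implicit Arguments. Unset Strict Implicit. Unset Printing Implicit Defensive.
Import Order.TTheory GRing.Theory Num.Theory.
Local Open Scope ring_scope.

Section ADOPT.
Variables (R : realType) (D : nat).

Definition enorm (a : 'rV[R]_D) : R := Num.sqrt (\sum_(i < D) (a 0 i) ^+ 2).

Definition clip (a : 'rV[R]_D) (c : R) : 'rV[R]_D :=
  \row_i Num.min (Num.max (a 0 i) (- c)) c.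

Definition hsq (a : 'rV[R]_D) : 'rV[R]_D := \row_i (a 0 i) ^+ 2.

Definition scaled (g v : 'rV[R]_D) (eps : R) : 'rV[R]_D :=
  \row_i (g 0 i / Num.max (Num.sqrt (v 0 i)) eps).

Fixpoint adopt_state (b1 b2 eps : R) (alpha c : nat -> R) (theta0 : 'rV[R]_D)
    (g : nat -> 'rV[R]_D) (t : nat) : 'rV[R]_D * 'rV[R]_D * 'rV[R]_D :=
  match t with
  | 0 => (0, theta0, hsq (g 0%N))
  | t'.+1 =>
      let: (m, th, v) := adopt_state b1 b2 eps alpha c theta0 g t' in
      let m' := b1 *: m + (1 - b1) *: clip (scaled (g t'.+1) v eps) (c t'.+1) in
      (m', th - alpha t'.+1 *: m', b2 *: v + (1 - b2) *: hsq (g t'.+1))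
  end.

Definition adopt_m b1 b2 eps alpha c theta0 g t : 'rV[R]_D :=
  (adopt_state b1 b2 eps alpha c theta0 g t).1.1.

End ADOPT.

(* Main.v *)
Require Import Defs.
From HB Require Import structures.
From mathcomp Require Import all_boot all_order all_algebra.
From mathcomp Require Import all_classical all_reals all_analysis.
From mathcomp Require Import ring lra measurable_realfun.
Import Order.TTheory GRing.Theory Num.Theory.
Local Open Scope ring_scope.

Lemma le_integral_nm (R : realType) (d : measure_display) (T : measurableType d)
  (mu : {measure set T -> \bar R}) (f1 f2 : T -> \bar R) :
  (forall x, (0 <= f1 x)%E) -> (forall x, (f1 x <= f2 x)%E) ->
  (\int[mu]_x f1 x <= \int[mu]_x f2 x)%E.
Proof.
move=> f10 f12.
have f20 : forall x, (0 <= f2 x)%E by move=> x; exact: le_trans (f10 x) (f12 x).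
rewrite !ge0_integralE //.
apply: le_ereal_sup => _ [h hf <-]; exists h => // x.
apply: le_trans (hf x) _.
by rewrite /patch /= !mem_set.
Qed.

Lemma clip_sq (R : realType) (x c : R) : 0 <= c ->
  (Num.min (Num.max x (- c)) c) ^+ 2 <= x ^+ 2.
Proof.
move=> c0.
have [h1|h1] := leP x (-c).
  have [h2|h2] := leP (-c) c; nra.
have [h2|h2] := leP x c; nra.
Qed.

Lemma scaled_sq (R : realType) (x s e : R) : 0 < e ->
  (x / Num.max s e) ^+ 2 <= x ^+ 2 / e ^+ 2.
Proof.
move=> e0.
have he : e <= Num.max s e by rewrite le_max lexx orbT.
have hp : 0 < Num.max s e by exact: lt_le_trans he.
rewrite expr_div_n; apply: ler_wpM2l; first exact: sqr_ge0.
rewrite lef_pV2 ?posrE ?exprn_gt0 //.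
by rewrite ler_pXn2r // ?nnegrE ltW.
Qed.

Lemma adopt_m_S (R : realType) (D : nat) b1 b2 eps alpha c theta0 (g : nat -> 'rV[R]_D) t :
  adopt_m b1 b2 eps alpha c theta0 g t.+1 =
  b1 *: adopt_m b1 b2 eps alpha c theta0 g t +
  (1 - b1) *: clip (scaled (g t.+1) (adopt_state b1 b2 eps alpha c theta0 g t).2 eps) (c t.+1).
Proof. by rewrite /adopt_m /=; case: adopt_state => [[m th] v]. Qed.

Lemma step_ineq (R : realType) (D : nat) (b1 eps : R) (a cl gg : 'rV[R]_D) :
  0 <= b1 <= 1 -> 0 < eps ->
  (forall i, cl 0 i ^+ 2 <= gg 0 i ^+ 2 / eps ^+ 2) ->
  \sum_(i < D) ((b1 *: a + (1 - b1) *: cl) 0 i) ^+ 2 <=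
  b1 * \sum_(i < D) (a 0 i) ^+ 2 + (1 - b1) / eps ^+ 2 * \sum_(i < D) (gg 0 i) ^+ 2.
Proof.
move=> /andP[h0 h1] e0 H.
rewrite !mulr_sumr -big_split /=; apply: ler_sum => i _.
rewrite !mxE.
have := H i.
rewrite -mulrA (mulrC (eps ^+ 2)^-1) (mulrA (1 - b1)).
set q := gg 0 i ^+ 2 / eps ^+ 2 => Hq.
rewrite -mulrA (mulrC (1 - b1)) mulrA -/q.
clear H; move: (cl 0 i) (a 0 i) Hq => x y Hq.
have : (b1 * y + (1 - b1) * x) ^+ 2 <= b1 * y ^+ 2 + (1 - b1) * x ^+ 2.
  have : 0 <= b1 * (1 - b1) * (y - x) ^+ 2.
    by apply: mulr_ge0; [apply: mulr_ge0; lra| exact: sqr_ge0].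
  move=> hh; rewrite -subr_ge0; apply: le_trans hh _; rewrite le_eqVlt; apply/orP; left; apply/eqP; ring.
have : (1 - b1) * x ^+ 2 <= (1 - b1) * q by apply: ler_wpM2l; lra.
rewrite (mulrC x) -mulrA -/q; lra.
Qed.

Fixpoint Mseq (R : ringType) (T : Type) (b1 k : R) (S : nat -> T -> R) (n : nat) (w : T) : R :=
  match n with 0 => 0 | n'.+1 => b1 * Mseq R T b1 k S n' w + k * S n w end.

Theorem lemmaG14 (R : realType) (d : measure_display) (T : measurableType d)
  (P : probability T R) (D : nat)
  (b1 b2 eps G : R) (alpha c : nat -> R) (theta0 : 'rV[R]_D)
  (g : nat -> T -> 'rV[R]_D) :
  0 <= b1 < 1 -> 0 <= b2 < 1 -> 0 < eps ->
  (forall t, 0 < alpha t) -> (forall t, 0 <= c t) -> 0 <= G ->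
  (forall t (i : 'I_D), measurable_fun setT (fun w => g t w 0 i)) ->
  (forall t, (\int[P]_w ((enorm (g t w)) ^+ 2)%:E <= (G ^+ 2)%:E)%E) ->
  forall t : nat,
    (\int[P]_w (enorm (adopt_m b1 b2 eps alpha c theta0 (fun s => g s w) t))%:E
       <= (Num.sqrt 2 * G / eps)%:E)%E.
Proof.
move=> /andP[b10 b11] _ e0 _ c0 G0 mg Hg t.
pose S s w := \sum_(i < D) (g s w 0 i) ^+ 2.
have S0 s w : 0 <= S s w by apply: sumr_ge0 => i _; exact: sqr_ge0.
have mS s : measurable_fun setT (S s).
  by apply: measurable_sum => i; apply: measurable_realfun.measurable_funX; exact: mg.
have IS s : (\int[P]_w (S s w)%:E <= (G ^+ 2)%:E)%E.
  apply: le_trans (Hg s); rewrite le_eqVlt; apply/orP; left; apply/eqP.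
  apply: eq_integral => w _; congr (_%:E).
  by rewrite /enorm sqr_sqrtr //; exact: S0.
pose k := (1 - b1) / eps ^+ 2.
have k0 : 0 <= k by apply: divr_ge0; [lra | exact: sqr_ge0].
pose M := Mseq R T b1 k S.
have M0 n w : 0 <= M n w.
  elim: n => [|n IH] //=; apply: addr_ge0; apply: mulr_ge0 => //.
have mM n : measurable_fun setT (M n).
  elim: n => [|n IH] /=; first exact: measurable_cst.
  apply: measurable_realfun.measurable_funD; apply: measurable_realfun.measurable_funM => //; exact: measurable_cst.
pose m n w := adopt_m b1 b2 eps alpha c theta0 (fun s => g s w) n.
have Hm n w : \sum_(i < D) (m n w 0 i) ^+ 2 <= M n w.
  elim: n => [|n IH] /=.
    by rewrite /m /adopt_m /= big1 // => i _; rewrite mxE expr0n.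
  rewrite /m adopt_m_S.

  apply: le_trans (@step_ineq R D b1 eps _ _ (g n.+1 w) _ _ _) _.
  - lra.
  - exact: e0.
  - move=> i; rewrite /clip /scaled mxE.
    apply: le_trans; first exact: (clip_sq _ _ _ (c0 _)).
    rewrite mxE; exact: scaled_sq.
  rewrite -/(m n w); apply: lerD; first by apply: ler_wpM2l.
  by rewrite le_eqVlt eqxx.
have mME n : measurable_fun [set: T] ((EFin \o M n) : T -> \bar R).
  exact/measurable_EFinP.
have mSE n : measurable_fun [set: T] ((EFin \o S n) : T -> \bar R).
  exact/measurable_EFinP.
have IM n : (\int[P]_w (M n w)%:E <= ((G / eps) ^+ 2)%:E)%E.
  elim: n => [|n IH].
    rewrite integral0_eq //= lee_fin; exact: sqr_ge0.
  rewrite (eq_integral (fun w => b1%:E * (M n w)%:E + k%:E * (S n.+1 w)%:E)%E); last first.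
    by move=> w _; rewrite /= EFinD !EFinM.
  rewrite ge0_integralD //; last first.
  - by apply: measurable_funeM; exact: mSE.
  - by move=> w _; apply: mule_ge0; rewrite lee_fin.
  - by apply: measurable_funeM; exact: mME.
  - by move=> w _; apply: mule_ge0; rewrite lee_fin.
  rewrite (ge0_integralZl_EFin _ _ (f1 := EFin \o M n)) //; last by move=> w _; rewrite lee_fin.
  rewrite (ge0_integralZl_EFin _ _ (f1 := EFin \o S n.+1)) //; last by move=> w _; rewrite lee_fin.
  apply: le_trans; first apply: leeD.
  - by apply: lee_wpmul2l; [rewrite lee_fin | exact: IH].
  - by apply: lee_wpmul2l; [rewrite lee_fin | exact: IS].
  rewrite -!EFinM -EFinD lee_fin le_eqVlt; apply/orP; left; apply/eqP.
  rewrite /k; field; exact: lt0r_neq0.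
pose K := G / eps.
have K0 : 0 <= K by apply: divr_ge0 => //; exact: ltW.
apply: (@le_trans _ _ K%:E); last first.
  rewrite lee_fin /K -mulrA; apply: ler_peMl; first by apply: divr_ge0 => //; exact: ltW.
  by rewrite -{1}sqrtr1 ler_sqrt // ler1n.
apply/lee_addgt0Pr => e he.
pose dl := K + e.
have dl0 : 0 < dl by rewrite /dl; lra.
have hf0 w : (0 <= ((2 * dl)^-1)%:E * (M t w)%:E)%E.
  by apply: mule_ge0; rewrite lee_fin // invr_ge0; lra.
apply: le_trans (@le_integral_nm R d T P _ (fun w => ((2 * dl)^-1)%:E * (M t w)%:E + (dl / 2)%:E)%E _ _) _.
- by move=> w; rewrite lee_fin sqrtr_ge0.
- move=> w; rewrite -EFinM -EFinD lee_fin.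
  have Hx := Hm t w.
  have Hs : 0 <= \sum_(i < D) (m t w 0 i) ^+ 2 by apply: sumr_ge0 => i _; exact: sqr_ge0.
  rewrite -/(m t w) /enorm.
  move: (Num.sqrt _) (sqr_sqrtr Hs) (sqrtr_ge0 (\sum_(i < D) (m t w 0 i) ^+ 2)) => x hx x0.
  rewrite -hx in Hx.
  have h1 : (2 * dl)^-1 * x ^+ 2 <= (2 * dl)^-1 * M t w.
    by apply: ler_wpM2l => //; rewrite invr_ge0; lra.
  have h2 : (2 * dl)^-1 * x ^+ 2 + dl / 2 - x = (2 * dl)^-1 * (x - dl) ^+ 2.
    by field; lra.
  have h3 : 0 <= (2 * dl)^-1 * (x - dl) ^+ 2.
    by apply: mulr_ge0; [rewrite invr_ge0; lra | exact: sqr_ge0].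
  lra.
rewrite ge0_integralD //; try (by move=> w _; rewrite lee_fin; lra);
  try (by apply: measurable_funeM; exact: mME); try (by move=> w _; exact: hf0).
rewrite (ge0_integralZl_EFin _ _ (f1 := EFin \o M t)) //; last first.
- by rewrite invr_ge0; lra.
- by move=> w _; rewrite lee_fin.
have -> : (\int[P]_x ((dl / 2)%:E) = (dl / 2)%:E)%E.
  by rewrite -[RHS]mule1 -(probability_setT P); exact: (integral_cst P measurableT).

apply: le_trans.
  apply: leeD; last exact: lexx.
  by apply: lee_wpmul2l; [rewrite lee_fin invr_ge0; lra | exact: (IM t)].
rewrite -EFinM -EFinD lee_fin.
have hK : K ^+ 2 <= dl ^+ 2 by rewrite /dl; nra.
have : (2 * dl)^-1 * K ^+ 2 <= (2 * dl)^-1 * dl ^+ 2.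
  by apply: ler_wpM2l => //; rewrite invr_ge0; lra.
have -> : (2 * dl)^-1 * dl ^+ 2 = dl / 2 by field; lra.
rewrite /dl /K; lra.
Qed.
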